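(* Let $(F,\mathrm{wt})$ and $(F',\mathrm{wt}')$ be weighted forests such that $\tilde{\mathbf{X}}_F=\tilde{\mathbf{X}}_{F'}$. Then $\tilde{\mathbf{G}}_F=\tilde{\mathbf{G}}_{F'}$. In other words, the extended generalized degree polynomial $\tilde{\mathbf{G}}_F$ of a weighted forest is determined by its chromatic MacMahon symmetric function $\tilde{\mathbf{X}}_F$.
   Context: All graphs are finite, simple and undirected. A weighted graph $(G,\mathrm{wt})=(V,E,\mathrm{wt})$ is a graph $G=(V,E)$ together with a function $\mathrm{wt}\colon V\to\mathbb{P}$, where $\mathbb{P}$ is the set of positive integers; for $A\subseteq V$ write $\mathrm{wt}(A)=\sum_{v\in A}\mathrm{wt}(v)$. A weighted forest is a weighted graph whose underlying graph is acyclic. A proper coloring of $G$ is a map $\kappa\colon V\to\mathbb{P}$ with $\kappa(u)\neq\kappa(v)$ whenever $uv\in E$; $\mathrm{Col}(G)$ denotes the set of proper colorings. The chromatic MacMahon symmetric function of $(G,\mathrm{wt})$ is the formal power series in two alphabets of commuting indeterminates $x_1,x_2,\dots$ and $y_1,y_2,\dots$ $$\tilde{\mathbf{X}}_G=\sum_{\kappa\in\mathrm{Col}(G)}\prod_{v\in V}x_{\kappa(v)}\,y_{\kappa(v)}^{\mathrm{wt}(v)}.$$ For $A\subseteq V$, an edge is internal to $A$ if both endpoints lie in $A$ and external to $A$ if exactly one endpoint lies in $A$; $\mathrm{int}(A)$ and $\mathrm{ext}(A)$ denote the numbers of internal and external edges. The extended generalized degree polynomial of $(G,\mathrm{wt})$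 is $$\tilde{\mathbf{G}}_G(w,x,y,z)=\sum_{A\subseteq V}w^{\mathrm{ext}(A)}x^{|A|}y^{\mathrm{wt}(A)}z^{\mathrm{int}(A)}.$$ *)

(* Defs.v *)
From HB Require Import structures.
From mathcomp Require Import all_boot all_order all_algebra.
From mathcomp Require Import mpoly.

Set Implicit Arguments.
Unset Strict Implicit.
Unset Printing Implicit Defensive.

Import GRing.Theory.
Local Open Scope ring_scope.

Definition simple_graph (V : finType) (E : rel V) : Prop :=
  ssrbool.symmetric E /\ ssrbool.irreflexive E.

Definition acyclic (V : finType) (E : rel V) : Prop :=
  forall s : seq V, uniq s -> (3 <= size s)%N -> ~~ cycle E s.

Definition forest (V : finType) (E : rel V) : Prop :=
  simple_graph E /\ acyclic E.

Definition edges (V : finType) (E : rel V) : {set {set V}} :=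
  [set e : {set V} | [exists u, exists v, (e == [set u; v]) && E u v]].

Definition int_edges (V : finType) (E : rel V) (A : {set V}) : nat :=
  #|[set e in edges E | e \subset A]|.

Definition ext_edges (V : finType) (E : rel V) (A : {set V}) : nat :=
  #|[set e in edges E | #|e :&: A| == 1%N]|.

Definition wtset (V : finType) (wt : V -> nat) (A : {set V}) : nat :=
  (\sum_(v in A) wt v)%N.

Definition proper_coloring (V : finType) (E : rel V) (n : nat)
  (k : {ffun V -> 'I_n}) : bool :=
  [forall u, forall v, E u v ==> (k u != k v)].

(* The chromatic MacMahon symmetric function is a formal power series in the
   variables x_1, x_2, ... and y_1, y_2, ...  We represent it by its family
   of truncations: [chromMacMahon E wt n] is the image of X~_G under
   x_j, y_j |-> 0 for j > n, a polynomial in the 2n variables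
   x_1..x_n (indices lshift) and y_1..y_n (indices rshift).
   Colour i : 'I_n stands for the positive integer i+1.  Two such series are
   equal iff all their truncations are equal. *)
Definition xvar (n : nat) (i : 'I_n) : 'I_(n + n) := lshift n i.
Definition yvar (n : nat) (i : 'I_n) : 'I_(n + n) := rshift n i.

Definition chromMacMahon (V : finType) (E : rel V) (wt : V -> nat) (n : nat)
  : {mpoly int[n + n]} :=
  \sum_(k : {ffun V -> 'I_n} | proper_coloring E k)
     \prod_(v : V) ('X_(xvar (k v)) * 'X_(yvar (k v)) ^+ wt v).

(* Extended generalized degree polynomial, in variables
   w = 'X_0, x = 'X_1, y = 'X_2, z = 'X_3. *)
Definition genDegPoly (V : finType) (E : rel V) (wt : V -> nat)
  : {mpoly int[4]} :=
  \sum_(A : {set V})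
     ('X_(0 : 'I_4) ^+ ext_edges E A * 'X_(1 : 'I_4) ^+ #|A|
      * 'X_(2 : 'I_4) ^+ wtset wt A * 'X_(3 : 'I_4) ^+ int_edges E A).

(* Main.v *)
From HB Require Import structures.
From mathcomp Require Import all_boot all_order all_algebra.
From mathcomp Require Import mpoly.
From mathcomp Require Import ring zify.
From Stdlib Require Import Lia.
Require Import Defs.

Set Implicit Arguments.
Unset Strict Implicit.
Unset Printing Implicit Defensive.
Import GRing.Theory.

Definition nbrs (V : finType) (E : rel V) (B : {set V}) (v : V) : {set V} :=
  [set u in B | E v u].

Lemma edgesP (V : finType) (E : rel V) e :
  reflect (exists u w, e = [set u; w] /\ E u w) (e \in edges E).
Proof.
rewrite inE; apply: (iffP existsP).
  by move=> [u /existsP [w /andP [/eqP -> Euw]]]; exists u, w.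
by move=> [u [w [-> Euw]]]; exists u; apply/existsP; exists w; rewrite eqxx.
Qed.
Arguments edgesP {V E e}.

Lemma in_edgeset (V : finType) (E : rel V) (B : {set V}) e :
  (e \in [set e in edges E | e \subset B]) = (e \in edges E) && (e \subset B).
Proof. by rewrite !inE. Qed.

Lemma int_edges0 (V : finType) (E : rel V) : int_edges E set0 = 0%N.
Proof.
rewrite /int_edges; apply/eqP; rewrite cards_eq0; apply/eqP/setP => e.
rewrite !inE; apply/negbTE/negP => /andP [eE esub].
case/existsP: eE esub => u /existsP [w /andP [/eqP -> _]] /subsetP /(_ u).
by rewrite !inE eqxx => /(_ isT).
Qed.

Lemma int_edges_del (V : finType) (E : rel V) (B : {set V}) v :
  simple_graph E -> v \in B ->
  int_edges E B = (int_edges E (B :\ v) + #|nbrs E B v|)%N.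
Proof.
move=> [Esym Eirr] vB.
rewrite /int_edges.
have -> : [set e in edges E | e \subset B] =
   [set e in edges E | e \subset B :\ v] :|: [set [set v; u] | u in nbrs E B v].
  apply/setP => e; rewrite in_setU !in_edgeset.
  apply/idP/idP.
  - case/andP => eE eB.
    case vE: (v \in e).
    + apply/orP; right. case/edgesP: (eE) => x [y [ee Exy]].
      move: vE eB; rewrite ee !inE => /orP [/eqP vx| /eqP vy] eB.
      * apply/imsetP; exists y; last by rewrite vx.
        rewrite !inE vx Exy andbT. by apply: (subsetP eB); rewrite !inE eqxx orbT.
      * apply/imsetP; exists x; last by rewrite vy setUC.
        rewrite !inE vy Esym Exy andbT. by apply: (subsetP eB); rewrite !inE eqxx.
    + apply/orP; left; rewrite eE /=. apply/subsetP => x xe.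
      rewrite !inE (subsetP eB) // andbT.
      by apply/eqP => xv; rewrite -xv xe in vE.
  - case/orP => [/andP [eE eB]| /imsetP [u]].
    + rewrite eE /=; apply: subset_trans eB _; exact: subsetDl.
    + rewrite !inE => /andP [uB Evu] ->; apply/andP; split.
      * by apply/existsP; exists v; apply/existsP; exists u; rewrite eqxx.
      * by apply/subsetP => x; rewrite !inE => /orP [/eqP ->| /eqP ->].
rewrite cardsU.
have -> : [set e in edges E | e \subset B :\ v] :&: [set [set v; u] | u in nbrs E B v] = set0.
  apply/setP => e; rewrite in_setI in_edgeset in_set0; apply/negbTE/negP.
  move=> /andP [/andP [_ eB] /imsetP [u _ ee]].
  have : v \in e by rewrite ee !inE eqxx.
  by move/(subsetP eB); rewrite !inE eqxx.
rewrite cards0 subn0; congr (_ + _)%N.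
apply: card_in_imset => x y; rewrite !inE => /andP [_ Evx] /andP [_ Evy] exy.
have : x \in [set v; y] by rewrite -exy !inE eqxx orbT.
rewrite !inE => /orP [/eqP xv|/eqP //]. by move: Evx; rewrite xv Eirr.
Qed.

Lemma cyc_case (V : finType) (E : rel V) x s y :
  forest E -> uniq (x :: s) -> path E x s -> E x y -> y != head x s ->
  y \in x :: s -> False.
Proof.
move=> [[Esym Eirr] Eacy] Hu Hp Exy yh.
rewrite inE => /orP [/eqP yx|ys]; first by move: Exy; rewrite yx Eirr.
case/splitPr: ys Hu Hp yh => s1 s2 Hu Hp yh.
case: s1 Hu Hp yh => [|z s1] Hu Hp yh; first by rewrite /= eqxx in yh.
apply: (negP (Eacy (x :: rcons (z :: s1) y) _ _)).
- apply: subseq_uniq Hu; rewrite -cats1 -cat_cons -cat_cons.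
  by apply: cat_subseq => //; rewrite sub1seq mem_head.
- by rewrite /= size_rcons.
- rewrite /cycle rcons_path last_rcons Esym Exy andbT.
  by move: Hp; rewrite cat_path /= rcons_path => /and3P [/andP [-> ->] -> _].
Qed.

Lemma no_min2 (V : finType) (E : rel V) (B : {set V}) :
  forest E -> (forall v, v \in B -> 1 < #|nbrs E B v|)%N ->
  forall m x s, (#|V| - size (x :: s) <= m)%N -> uniq (x :: s) -> path E x s ->
  all (mem B) (x :: s) -> False.
Proof.
move=> Fo Hdeg; have [[Esym Eirr] Eacy] := Fo.
elim=> [|m IH] x s Hm Hu Hp Hall;
have xB : x \in B by move: Hall => /= /andP [].
all: have := Hdeg x xB; rewrite (cardsD1 (head x s)) => Hd.
all: have /set0Pn [y] : nbrs E B x :\ head x s != set0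
       by rewrite -card_gt0; move: Hd; case: (_ \in _) => /=; lia.
all: rewrite !inE => /and3P [yh yB Exy].
all: have Hsz : uniq (y :: x :: s) -> (size (y :: x :: s) <= #|V|)%N
      by move=> Hu'; move/card_uniqP: (Hu') => <-; exact: max_card.
all: case ys: (y \in x :: s); first by apply: (cyc_case Fo Hu Hp Exy yh).
- by have := Hsz; rewrite cons_uniq ys Hu => /(_ isT); move: Hm => /=; lia.
- apply: (IH y (x :: s)) => /=.
  + by have := Hsz; rewrite cons_uniq ys Hu => /(_ isT); move: Hm => /=; lia.
  + by rewrite ys -cons_uniq Hu.
  + by rewrite Esym Exy Hp.
  + by move: Hall => /= ->; rewrite yB.
Qed.

Lemma leaf_ex (V : finType) (E : rel V) (B : {set V}) :
  forest E -> B != set0 -> exists2 v, v \in B & (#|nbrs E B v| <= 1)%N.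
Proof.
move=> Fo /set0Pn [x xB].
case: (boolP [exists v in B, #|nbrs E B v| <= 1]%N).
  by case/exists_inP => v vB H; exists v.
move=> /exists_inPn H; exfalso.
apply: (@no_min2 V E B Fo _ #|V| x [::]) => //=.
- by move=> v /H; rewrite -ltnNge.
- by lia.
- by rewrite xB.
Qed.

Lemma int_le (V : finType) (E : rel V) (B : {set V}) :
  forest E -> (int_edges E B <= #|B|)%N.
Proof.
move=> Fo; have [SG _] := Fo.
move: {2}#|B| (leqnn #|B|) => k; elim: k B => [|k IH] B HB.
  move: HB; rewrite leqn0 cards_eq0 => /eqP ->; by rewrite int_edges0.
case: (eqVneq B set0) => [->|nB]; first by rewrite int_edges0.
have [v vB Hv] := leaf_ex Fo nB.
rewrite (int_edges_del SG vB) (cardsD1 v B) vB.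
have : (int_edges E (B :\ v) <= #|B :\ v|)%N.
  by apply: IH; move: HB; rewrite (cardsD1 v B) vB.
by move: Hv; lia.
Qed.
Lemma sum_bool (I : finType) (b : pred I) :
  (\sum_(i : I) (b i : nat) = #|[pred i | b i]|)%N.
Proof.
rewrite -sum1_card [in RHS]big_mkcond /=; apply: eq_bigr => i _; by rewrite inE; case: (b i).
Qed.

Definition upd (V I : finType) (k : {ffun V -> I}) v c : {ffun V -> I} :=
  [ffun u => if u == v then c else k u].

Lemma fiber (V : finType) (n : nat) (v : V) (P : pred {ffun V -> 'I_n})
  (R : {ffun V -> 'I_n} -> pred 'I_n) m :
  (forall k c, P (upd k v c) = P k) -> (forall k c d, R (upd k v c) d = R k d) ->
  (forall k, P k -> #|[pred c | R k c]| = m) ->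
  (#|[pred k | P k && R k (k v)]| * n = #|[pred k | P k]| * m)%N.
Proof.
move=> HP HR Hm.
pose g (p : {ffun V -> 'I_n} * 'I_n) := (P p.1 && R p.1 p.2 : nat).
pose phi (p : {ffun V -> 'I_n} * 'I_n) := (upd p.1 v p.2, p.1 v).
have phiK : involutive phi.
  case=> k c; rewrite /phi /= /upd !ffunE eqxx; congr (_, _).
  by apply/ffunP => u; rewrite !ffunE; case: eqP => [->|].
have E1 : (\sum_p g p = #|[pred k | P k]| * m)%N.
  rewrite -(pair_bigA _ (fun k c => g (k, c))) /= -sum_nat_const [in RHS]big_mkcond /=.
  apply: eq_bigr => k _; rewrite inE; case: (boolP (P k)) => Pk /=.
    by rewrite -(Hm k Pk) -sum_bool; apply: eq_bigr => c _; rewrite /g /= Pk.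
  by apply: big1 => c _; rewrite /g /= (negbTE Pk).
have E2 : (\sum_p g p = #|[pred k | P k && R k (k v)]| * n)%N.
  rewrite (reindex_inj (inv_inj phiK)) /=.
  rewrite -(pair_bigA _ (fun k c => g (phi (k, c)))) /= -sum_nat_const [in RHS]big_mkcond /=.
  apply: eq_bigr => k _; rewrite inE /g /phi /=.
  under eq_bigr do rewrite HP HR.
  case: (P k && R k (k v)) => /=; last by rewrite big1.
  by rewrite big_const_ord iter_addn_0 mul1n.
by rewrite -E2 E1.
Qed.

Definition okc (V : finType) (E : rel V) (n a : nat) (A U : {set V})
  (k : {ffun V -> 'I_n}) : bool :=
  [forall u in U, (k u < a) == (u \in A)] &&
  [forall u in U, forall w in U, E u w ==> (k u != k w)].
Arguments okc {V} E {n} a A U k.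

Definition Rv (V : finType) (E : rel V) (n a : nat) (A U : {set V}) (v : V)
  (k : {ffun V -> 'I_n}) (c : 'I_n) : bool :=
  ((c < a) == (v \in A)) && [forall u in U :\ v, E v u ==> (k u != c)].
Arguments Rv {V} E {n} a A U v k c.

Lemma okc_split (V : finType) (E : rel V) (n a : nat) (A U : {set V}) (v : V) (k : {ffun V -> 'I_n}) :
  simple_graph E -> v \in U ->
  okc E a A U k = okc E a A (U :\ v) k && Rv E a A U v k (k v).
Proof.
move=> [Esym Eirr] vU; rewrite /okc /Rv.
apply/idP/idP.
- case/andP => /forall_inP H1 /forall_inP H2.
  apply/andP; split; [apply/andP; split|apply/andP; split].
  + by apply/forall_inP => u; rewrite !inE => /andP [_ /H1].
  + apply/forall_inP => u; rewrite !inE => /andP [_ uU].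
    apply/forall_inP => w; rewrite !inE => /andP [_ wU].
    by move/forall_inP: (H2 u uU) => /(_ w wU).
  + exact: H1.
  + apply/forall_inP => u; rewrite !inE => /andP [_ uU].
    apply/implyP => Evu; rewrite eq_sym.
    by move/forall_inP: (H2 v vU) => /(_ u uU) /implyP /(_ Evu).
- case/andP => /andP [/forall_inP H1 /forall_inP H2] /andP [Hv /forall_inP H3].
  apply/andP; split.
  + apply/forall_inP => u uU; case: (eqVneq u v) => [->//|uv].
    by apply: H1; rewrite !inE uv.
  + apply/forall_inP => u uU; apply/forall_inP => w wU; apply/implyP => Euw.
    case: (eqVneq u v) => [eu|uv]; case: (eqVneq w v) => [ew|wv].
    * by move: Euw; rewrite eu ew Eirr.
    * have := H3 w; rewrite !inE wv wU -eu Euw /= => /(_ isT).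
      by rewrite eq_sym eu.
    * have := H3 u; rewrite !inE uv uU -ew Esym Euw /= => /(_ isT).
      by rewrite ew.
    * have := H2 u; rewrite !inE uv uU => /(_ isT) /forall_inP /(_ w).
      by rewrite !inE wv wU Euw => /(_ isT).
Qed.

Lemma okc_upd (V : finType) (E : rel V) (n a : nat) (A U : {set V}) (v : V) (k : {ffun V -> 'I_n}) c :
  okc E a A (U :\ v) (upd k v c) = okc E a A (U :\ v) k.
Proof.
rewrite /okc /upd.
have H : forall u, u \in U :\ v -> [ffun u => if u == v then c else k u] u = k u.
  by move=> u; rewrite !inE ffunE => /andP [/negbTE -> _].
congr andb.
  apply: eq_forallb => u; case uU: (u \in U :\ v) => //=; by rewrite H.
apply: eq_forallb => u; case uU: (u \in U :\ v) => //=.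
apply: eq_forallb => w; case wU: (w \in U :\ v) => //=; by rewrite !H.
Qed.

Lemma Rv_upd (V : finType) (E : rel V) (n a : nat) (A U : {set V}) (v : V) (k : {ffun V -> 'I_n}) c d :
  Rv E a A U v (upd k v c) d = Rv E a A U v k d.
Proof.
rewrite /Rv /upd; congr andb.
apply: eq_forallb => u; case uU: (u \in U :\ v) => //=.
by move: uU; rewrite !inE ffunE => /andP [/negbTE -> _].
Qed.

Lemma card_lt (n a : nat) : (a <= n)%N -> #|[pred c : 'I_n | c < a]| = a.
Proof.
move=> an; rewrite -sum1_card.
rewrite (eq_bigl (fun c : 'I_n => true && (c < a))); last by move=> c; rewrite inE.
rewrite (big_ord_narrow_cond an) /=.
by rewrite big_const_ord iter_addn_0 mul1n.
Qed.

Lemma card_class (n a : nat) (bv : bool) : (a <= n)%N ->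
  #|[pred c : 'I_n | (c < a) == bv]| = if bv then a else n - a.
Proof.
move=> an; case: bv.
  rewrite -[RHS](card_lt an); apply: eq_card => c; by rewrite !inE eqb_id.
have H := cardC [pred c : 'I_n | c < a]; rewrite card_ord card_lt // in H.
apply: (@addnI a); rewrite subnKC // -[RHS]H; congr (_ + _)%N.
by apply: eq_card => c; rewrite !inE eqbF_neg.
Qed.

Lemma Rv_card (V : finType) (E : rel V) (n a : nat) (A U : {set V}) (v : V) (k : {ffun V -> 'I_n}) :
  simple_graph E -> (a <= n)%N -> v \in U -> (#|nbrs E U v| <= 1)%N ->
  okc E a A (U :\ v) k ->
  #|[pred c | Rv E a A U v k c]| =
  ((if v \in A then a else n - a) - #|[set u in nbrs E U v | (u \in A) == (v \in A)]|)%N.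
Proof.
move=> [Esym Eirr] an vU Hnb /andP [/forall_inP Hcl _].
rewrite -(card_class (v \in A) an).
move: Hnb; rewrite leq_eqVlt ltnS leqn0 => /orP [/cards1P [u Hu] | /eqP /cards0_eq H0].
- have uN : u \in nbrs E U v by rewrite Hu inE.
  move: (uN); rewrite !inE => /andP [uU Evu].
  have uv : u != v by apply/eqP => e; move: Evu; rewrite e Eirr.
  have HR : forall c, Rv E a A U v k c = ((c < a) == (v \in A)) && (c != k u).
    move=> c; rewrite /Rv; congr andb; apply/forall_inP/idP.
      by move=> /(_ u); rewrite !inE uv uU Evu eq_sym => /(_ isT).
    move=> cu w; rewrite !inE => /andP [wv wU]; apply/implyP => Evw.
    have : w \in nbrs E U v by rewrite !inE wU Evw.
    by rewrite Hu inE => /eqP ->; rewrite eq_sym.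
  rewrite (eq_card (B := [predD1 [pred c : 'I_n | (c < a) == (v \in A)] & k u])); last first.
    by move=> c; rewrite !inE HR andbC.
  suff -> : #|[set u0 in nbrs E U v | (u0 \in A) == (v \in A)]| =
            (k u \in [pred c : 'I_n | (c < a) == (v \in A)]).
    by rewrite (cardD1 (k u) [pred c : 'I_n | (c < a) == (v \in A)]) addKn.
  rewrite Hu.
  have -> : [set u0 in [set u] | (u0 \in A) == (v \in A)] =
            if (u \in A) == (v \in A) then [set u] else set0.
    apply/setP => w; rewrite !inE; case: (eqVneq w u) => [->|wu] /=;
    by case: ifP => H; rewrite ?inE ?eqxx ?H ?(negbTE wu).
  have Hku : (k u < a) = (u \in A).
    by have := Hcl u; rewrite !inE uv uU => /(_ isT) /eqP.
  rewrite inE ?Hku.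
  by case: (_ == _); rewrite ?cards1 ?cards0.
- have HR : forall c, Rv E a A U v k c = ((c < a) == (v \in A)).
    move=> c; rewrite /Rv; case: (_ == _) => //=.
    apply/forall_inP => w; rewrite !inE => /andP [wv wU]; apply/implyP => Evw.
    have : w \in nbrs E U v by rewrite !inE wU Evw.
    by rewrite H0 inE.
  rewrite H0 (eq_card (B := [pred c : 'I_n | (c < a) == (v \in A)])); last first.
    by move=> c; rewrite !inE HR.
  have -> : [set u in set0 | (u \in A) == (v \in A)] = set0 :> {set V}.
    by apply/setP => w; rewrite !inE.
  by rewrite cards0 subn0.
Qed.

Definition gf (V : finType) (E : rel V) (B : {set V}) (c : nat) : nat :=
  (c ^ (#|B| - int_edges E B) * c.-1 ^ int_edges E B)%N.

Lemma g_step (V : finType) (E : rel V) (B : {set V}) v c :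
  forest E -> v \in B -> (#|nbrs E B v| <= 1)%N ->
  gf E B c = (gf E (B :\ v) c * (c - #|nbrs E B v|))%N.
Proof.
move=> Fo vB Hd; have [SG _] := Fo.
rewrite /gf (int_edges_del SG vB) (cardsD1 v B) vB.
have le := int_le (B :\ v) Fo.
move: Hd; rewrite leq_eqVlt ltnS leqn0 => /orP [/eqP ->|/eqP ->].
- have -> : (1 + #|B :\ v| - (int_edges E (B :\ v) + 1) = #|B :\ v| - int_edges E (B :\ v))%N by lia.
  by rewrite expnD expn1 subn1 mulnA.
- have -> : (1 + #|B :\ v| - (int_edges E (B :\ v) + 0) = (#|B :\ v| - int_edges E (B :\ v)).+1)%N by lia.
  by rewrite addn0 subn0 expnS [(c * _)%N]mulnC mulnAC.
Qed.

Lemma count_main (V : finType) (E : rel V) (n a : nat) (A : {set V}) :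
  forest E -> (a <= n)%N -> forall U : {set V},
  (#|[pred k : {ffun V -> 'I_n} | okc E a A U k]| * n ^ #|U| =
   n ^ #|V| * (gf E (U :&: A) a * gf E (U :\: A) (n - a)))%N.
Proof.
move=> Fo an; have [SG _] := Fo.
move=> U; move: {2}#|U| (leqnn #|U|) => t; elim: t U => [|t IH] U HU.
  move: HU; rewrite leqn0 cards_eq0 => /eqP ->.
  rewrite set0I set0D /gf cards0 int_edges0 !expn0 !muln1.
  have -> : #|[pred k : {ffun V -> 'I_n} | okc E a A set0 k]| = #|{ffun V -> 'I_n}|.
    apply: eq_card => k; rewrite !inE /okc.
    by apply/andP; split; apply/forall_inP => u; rewrite inE.
  by rewrite card_ffun card_ord.
case: (eqVneq U set0) => [->|nU].
  rewrite set0I set0D /gf cards0 int_edges0 !expn0 !muln1.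
  have -> : #|[pred k : {ffun V -> 'I_n} | okc E a A set0 k]| = #|{ffun V -> 'I_n}|.
    apply: eq_card => k; rewrite !inE /okc.
    by apply/andP; split; apply/forall_inP => u; rewrite inE.
  by rewrite card_ffun card_ord.
have [v vU Hv] := leaf_ex Fo nU.
set m := ((if v \in A then a else n - a) -
           #|[set u in nbrs E U v | (u \in A) == (v \in A)]|)%N.
have Fi := @fiber V n v (okc E a A (U :\ v)) (Rv E a A U v) m
  (fun k c => @okc_upd V E n a A U v k c) (fun k c d => @Rv_upd V E n a A U v k c d)
  (fun k Pk => @Rv_card V E n a A U v k SG an vU Hv Pk).
have eqU : #|[pred k : {ffun V -> 'I_n} | okc E a A U k]| =
           #|[pred k : {ffun V -> 'I_n} | okc E a A (U :\ v) k && Rv E a A U v k (k v)]|.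
  apply: eq_card => k; rewrite !inE; exact: okc_split.
have HUv : (#|U :\ v| <= t)%N by move: HU; rewrite (cardsD1 v U) vU.
have IHv := IH (U :\ v) HUv.
rewrite (cardsD1 v U) vU expnD expn1 mulnA eqU Fi -mulnA [(m * _)%N]mulnC mulnA IHv.
rewrite -mulnA; congr (_ * _)%N.
have nbsub : forall B, nbrs E (U :&: B) v \subset nbrs E U v.
  by move=> B; apply/subsetP => w; rewrite !inE => /andP [/andP [-> _] ->].
case vA: (v \in A).
- have e1 : (U :\ v) :&: A = (U :&: A) :\ v.
    by apply/setP => w; rewrite !inE andbA.
  have e2 : (U :\ v) :\: A = U :\: A.
    apply/setP => w; rewrite !inE; case: (eqVneq w v) => [->|] //=.
    by rewrite vA.
  have e3 : [set u in nbrs E U v | (u \in A) == true] = nbrs E (U :&: A) v.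
    by apply/setP => w; rewrite !inE eqb_id; case: (w \in U); case: (w \in A); case: (E v w).
  rewrite /m vA e1 e2 e3 (g_step a Fo (v := v) (B := U :&: A)); last 2 first.
  + by rewrite !inE vU vA.
  + by apply: leq_trans Hv; apply: subset_leq_card.
  by rewrite mulnAC.
- have e1 : (U :\ v) :&: A = U :&: A.
    apply/setP => w; rewrite !inE; case: (eqVneq w v) => [->|] //=.
    by rewrite vA andbF.
  have e2 : (U :\ v) :\: A = (U :\: A) :\ v.
    by apply/setP => w; rewrite !inE; case: (w \in A); case: (w \in U); case: (w != v).
  have e3 : [set u in nbrs E U v | (u \in A) == false] = nbrs E (U :\: A) v.
    by apply/setP => w; rewrite !inE eqbF_neg; case: (w \in U); case: (w \in A); case: (E v w).
  have nbsub' : nbrs E (U :\: A) v \subset nbrs E U v.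
    by apply/subsetP => w; rewrite !inE => /andP [/andP [_ ->] ->].
  rewrite /m vA e1 e2 e3 (g_step (n - a) Fo (v := v) (B := U :\: A)); last 2 first.
  + by rewrite !inE vU vA.
  + by apply: leq_trans Hv; apply: subset_leq_card.
  by rewrite mulnA.
Qed.

Local Open Scope ring_scope.

Definition envf (S : pzRingType) (n a : nat) (xi eta : S) (j : 'I_(n + n)) : S :=
  match split j with
  | inl i => if (i < a)%N then xi else 1
  | inr i => if (i < a)%N then eta else 1
  end.

Lemma envf_x (S : pzRingType) (n a : nat) (xi eta : S) (i : 'I_n) :
  envf a xi eta (xvar i) = if (i < a)%N then xi else 1.
Proof. by rewrite /envf /xvar -[lshift n i]/(unsplit (inl i)) unsplitK. Qed.

Lemma envf_y (S : pzRingType) (n a : nat) (xi eta : S) (i : 'I_n) :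
  envf a xi eta (yvar i) = if (i < a)%N then eta else 1.
Proof. by rewrite /envf /yvar -[rshift n i]/(unsplit (inr i)) unsplitK. Qed.

Lemma okcT (V : finType) (E : rel V) (n a : nat) (A : {set V}) (k : {ffun V -> 'I_n}) :
  okc E a A setT k = proper_coloring E k && ([set v | (k v < a)%N] == A).
Proof.
rewrite /okc /proper_coloring andbC; congr andb.
  apply: eq_forallb => u; rewrite in_setT /=.
  by apply: eq_forallb => w; rewrite in_setT.
apply/forall_inP/eqP.
  move=> H; apply/setP => u; have := H u (in_setT u).
  by rewrite inE => /eqP.
by move=> <- u _; rewrite inE.
Qed.

Lemma eval_chrom (V : finType) (E : rel V) (wt : V -> nat) (S : comNzRingType)
  (n a : nat) (xi eta : S) :
  mmap intr (envf a xi eta) (chromMacMahon E wt n) =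
  \sum_(A : {set V}) (xi ^+ #|A| * eta ^+ wtset wt A) *+
     #|[pred k : {ffun V -> 'I_n} | okc E a A setT k]|.
Proof.
rewrite /chromMacMahon rmorph_sum /=.
have H1 : forall k : {ffun V -> 'I_n},
   mmap intr (envf a xi eta) (\prod_v ('X_(xvar (k v)) * 'X_(yvar (k v)) ^+ wt v)) =
   xi ^+ #|[set v | (k v < a)%N]| * eta ^+ wtset wt [set v | (k v < a)%N].
  move=> k; rewrite rmorph_prod /=.
  under eq_bigr do rewrite rmorphM rmorphXn /= !mmapX !mmap1U envf_x envf_y.
  rewrite (bigID (fun v => (k v < a)%N)) /=.
  rewrite [X in _ * X]big1; last by move=> v /negbTE ->; rewrite expr1n mulr1.
  rewrite mulr1 (eq_bigr (fun v => xi * eta ^+ wt v)); last by move=> v ->.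
  rewrite (eq_bigl (fun v => v \in [set v | (k v < a)%N])); last by move=> v; rewrite inE.
  by rewrite big_split prodr_const /wtset prodrXr.
under eq_bigr do rewrite H1.
rewrite (partition_big (fun k : {ffun V -> 'I_n} => [set v | (k v < a)%N]) xpredT) //=.
apply: eq_bigr => A _.
rewrite (eq_bigr (fun _ => xi ^+ #|A| * eta ^+ wtset wt A)); last by move=> k /andP [_ /eqP ->].
rewrite -sumr_const; apply: eq_bigl => k; by rewrite inE okcT.
Qed.

Lemma count_T (V : finType) (E : rel V) (n a : nat) (A : {set V}) :
  forest E -> (0 < n)%N -> (a <= n)%N ->
  #|[pred k : {ffun V -> 'I_n} | okc E a A setT k]| = (gf E A a * gf E (~: A) (n - a))%N.
Proof.
move=> Fo n0 an; have H := count_main A Fo an setT.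
rewrite cardsT setTI setTD [in LHS]mulnC in H.
have p0 : (0 < n ^ #|V|)%N by rewrite expn_gt0 n0.
by apply/eqP; rewrite -(eqn_pmul2l p0) H.
Qed.

Definition gpoly (K : fieldType) (V : finType) (E : rel V) (B : {set V}) : {poly K} :=
  'X ^+ (#|B| - int_edges E B) * ('X - 1%:P) ^+ int_edges E B.

Lemma gpolyE (K : fieldType) (V : finType) (E : rel V) (B : {set V}) (x : K) :
  (gpoly K E B).[x] = x ^+ (#|B| - int_edges E B) * (x - 1) ^+ int_edges E B.
Proof. by rewrite /gpoly hornerM !horner_exp hornerX hornerXsubC. Qed.

Lemma gf_cast (K : fieldType) (V : finType) (E : rel V) (B : {set V}) (c : nat) :
  (0 < c)%N -> ((gf E B c)%:R : K) = (gpoly K E B).[c%:R].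
Proof.
move=> c0; rewrite gpolyE /gf natrM !natrX -subn1 natrB //.
Qed.

Lemma poly_eq_nat (K : fieldType) (p q : {poly K}) :
  injective (fun m : nat => (m%:R : K)) ->
  (forall m, (0 < m)%N -> p.[m%:R] = q.[m%:R]) -> p = q.
Proof.
move=> inj H; apply/eqP; rewrite -subr_eq0; apply/negPn/negP => nz.
set rs := [seq (i.+1)%:R | i <- iota 0 (size (p - q))] : seq K.
have Hall : all (root (p - q)) rs.
  by apply/allP => x /mapP [i _ ->]; rewrite /root hornerD hornerN H // subrr.
have Hu : uniq rs.
  by rewrite map_inj_uniq ?iota_uniq // => i j /inj; case.
by have := max_poly_roots nz Hall Hu; rewrite size_map size_iota ltnn.
Qed.

Definition Tsum (K : fieldType) (V : finType) (E : rel V) (wt : V -> nat)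
  (xi eta x y : K) : K :=
  \sum_(A : {set V}) xi ^+ #|A| * eta ^+ wtset wt A *
     (gpoly K E A).[x] * (gpoly K E (~: A)).[y].

Lemma eval_T (K : fieldType) (V : finType) (E : rel V) (wt : V -> nat)
  (xi eta : K) (a b : nat) :
  forest E -> (0 < a)%N -> (0 < b)%N ->
  mmap intr (envf a xi eta) (chromMacMahon E wt (a + b)) =
  Tsum E wt xi eta a%:R b%:R.
Proof.
move=> Fo a0 b0; rewrite eval_chrom /Tsum; apply: eq_bigr => A _.
rewrite count_T ?addn_gt0 ?a0 ?leq_addr // addKn.
by rewrite -mulr_natr natrM !gf_cast // mulrA.
Qed.

Lemma Tsum_transfer (K : fieldType) (V V' : finType) (E : rel V) (E' : rel V')
  (wt : V -> nat) (wt' : V' -> nat) (xi eta : K) :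
  injective (fun m : nat => (m%:R : K)) ->
  (forall a b, (0 < a)%N -> (0 < b)%N ->
     Tsum E wt xi eta a%:R b%:R = Tsum E' wt' xi eta a%:R b%:R) ->
  forall x y, Tsum E wt xi eta x y = Tsum E' wt' xi eta x y.
Proof.
move=> inj H x y.
pose P1 (V : finType) (E : rel V) (wt : V -> nat) (y : K) : {poly K} :=
  \sum_(A : {set V}) (xi ^+ #|A| * eta ^+ wtset wt A * (gpoly K E (~: A)).[y]) *: gpoly K E A.
have P1E : forall (V : finType) (E : rel V) wt y x,
    (P1 V E wt y).[x] = Tsum E wt xi eta x y.
  move=> V0 E0 wt0 y0 x0; rewrite /P1 horner_sum /Tsum; apply: eq_bigr => A _.
  by rewrite hornerZ mulrAC.
pose P2 (V : finType) (E : rel V) (wt : V -> nat) (x : K) : {poly K} :=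
  \sum_(A : {set V}) (xi ^+ #|A| * eta ^+ wtset wt A * (gpoly K E A).[x]) *: gpoly K E (~: A).
have P2E : forall (V : finType) (E : rel V) wt y x,
    (P2 V E wt x).[y] = Tsum E wt xi eta x y.
  move=> V0 E0 wt0 y0 x0; rewrite /P2 horner_sum /Tsum; apply: eq_bigr => A _.
  by rewrite hornerZ.
have H1 : forall b, (0 < b)%N -> Tsum E wt xi eta x b%:R = Tsum E' wt' xi eta x b%:R.
  move=> b b0; rewrite -!P1E; congr (horner _ x).
  apply: poly_eq_nat inj _ => a a0; rewrite !P1E; exact: H.
rewrite -!P2E; congr (horner _ y).
apply: poly_eq_nat inj _ => b b0; rewrite !P2E; exact: H1.
Qed.

Lemma cardsP (T : finType) (D : {set T}) (P : pred T) :
  #|[set x in D | P x]| = (\sum_(x in D) (P x : nat))%N.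
Proof.
rewrite -sum1_card big_mkcond [RHS]big_mkcond /=; apply: eq_bigr => x _.
by rewrite !inE; case: (x \in D); case: (P x).
Qed.

Lemma card_setI_sum (T : finType) (B A : {set T}) :
  #|B :&: A| = (\sum_(x in B) (x \in A : nat))%N.
Proof.
rewrite -sum1_card big_mkcond [RHS]big_mkcond /=; apply: eq_bigr => x _.
by rewrite !inE; case: (x \in B); case: (x \in A).
Qed.

Lemma edge_part (V : finType) (E : rel V) (A : {set V}) :
  simple_graph E ->
  (int_edges E A + int_edges E (~: A) + ext_edges E A = #|edges E|)%N.
Proof.
move=> [Es Ei]; rewrite /int_edges /ext_edges !cardsP -!big_split /= -sum1_card.
apply: eq_bigr => e eE; case/edgesP: eE => u [w [-> Euw]].
have uw : u != w by apply/eqP => h; move: Euw; rewrite h Ei.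
rewrite card_setI_sum big_setU1 ?big_set1 /=; last by rewrite inE.
rewrite !subUset !sub1set !inE.
by case: (u \in A); case: (w \in A).
Qed.

Lemma int_edgesT (V : finType) (E : rel V) : int_edges E setT = #|edges E|.
Proof. by rewrite /int_edges; apply: eq_card => e; rewrite !inE subsetT andbT. Qed.

Lemma chrom2 (V : finType) (E : rel V) (wt : V -> nat) (x : int) :
  forest E ->
  mmap intr (envf 2 x 1) (chromMacMahon E wt 2) = x ^+ #|V| *+ 2 ^ (#|V| - #|edges E|).
Proof.
move=> Fo; rewrite eval_chrom (bigD1 setT) //= big1 ?addr0.
  rewrite count_T // subnn setCT /gf cards0 int_edges0 expn0 muln1 cardsT int_edgesT.
  by rewrite expr1n mulr1 /= exp1n !muln1.
move=> A AT; rewrite (eq_card0 (A := [pred k : {ffun V -> 'I_2} | okc E 2 A setT k])) ?mulr0n //.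
move=> k; rewrite !inE okcT; apply/negbTE; rewrite negb_and; apply/orP; right.
apply/negP => /eqP HA; move: AT; rewrite -HA; apply/negP; rewrite negbK.
by apply/eqP/setP => v; rewrite !inE ltn_ord.
Qed.

Import Num.Theory.

Lemma NM_eq (V V' : finType) (E : rel V) (E' : rel V')
  (wt : V -> nat) (wt' : V' -> nat) :
  forest E -> forest E' ->
  (forall n : nat, chromMacMahon E wt n = chromMacMahon E' wt' n) ->
  #|V| = #|V'| /\ #|edges E| = #|edges E'|.
Proof.
move=> Fo Fo' HX.
have h : forall x : int, x ^+ #|V| *+ 2 ^ (#|V| - #|edges E|) =
                         x ^+ #|V'| *+ 2 ^ (#|V'| - #|edges E'|).
  by move=> x; rewrite -(chrom2 wt x Fo) -(chrom2 wt' x Fo') HX.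
have h1 := h 1; rewrite !expr1n in h1.
move/eqP: h1; rewrite eqr_nat => /eqP h1.
have e : forall k : nat, (2 : int) ^+ k = (2 ^ k)%:R by move=> k; rewrite natrX.
have h2 := h 2; rewrite !e -!mulrnA h1 in h2.
move/eqP: h2; rewrite eqr_nat eqn_pmul2r ?expn_gt0 // => /eqP /expnI HN.
have HN' : #|V| = #|V'| by apply: HN.
split => //.
have l1 : (#|edges E| <= #|V|)%N by rewrite -int_edgesT -[X in (_ <= X)%N]cardsT; apply: int_le.
have l2 : (#|edges E'| <= #|V'|)%N by rewrite -int_edgesT -[X in (_ <= X)%N]cardsT; apply: int_le.
move/expnI: h1 => /(_ isT) h1.
by lia.
Qed.

Lemma key0 (K : comNzRingType) (W X Z al be xi r q : K) (s i j e N : nat) :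
  (i <= s)%N -> (j <= N - s)%N -> (s <= N)%N ->
  al - 1 = al * r -> be - 1 = be * q -> xi * al = X * be -> W * r = Z -> W * q = 1 ->
  W ^+ (i + j + e) * (xi ^+ s * (al ^+ (s - i) * (al - 1) ^+ i) *
     (be ^+ (N - s - j) * (be - 1) ^+ j))
  = be ^+ N * (W ^+ e * X ^+ s * Z ^+ i).
Proof.
move=> hi hj sN ha hb hx hr hq.
have e1 : al ^+ (s - i) * al ^+ i = al ^+ s by rewrite -exprD subnK.
have e2 : be ^+ (N - s - j) * be ^+ j = be ^+ (N - s) by rewrite -exprD subnK.
have e3 : be ^+ s * be ^+ (N - s) = be ^+ N by rewrite -exprD subnKC.
have e4 : W ^+ i * r ^+ i = Z ^+ i by rewrite -exprMn hr.
have e5 : W ^+ j * q ^+ j = 1 by rewrite -exprMn hq expr1n.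
have e6 : xi ^+ s * al ^+ s = X ^+ s * be ^+ s by rewrite -!exprMn hx.
rewrite ha hb !exprMn !exprD.
transitivity (W ^+ e * (xi ^+ s * (al ^+ (s - i) * al ^+ i)) * (be ^+ (N - s - j) * be ^+ j)
   * (W ^+ i * r ^+ i) * (W ^+ j * q ^+ j)); first by ring.
rewrite e1 e2 e4 e5 e6 -e3; ring.
Qed.

Lemma key (K : fieldType) (W X Z : K) (s i j e N : nat) :
  W != 0 -> W - 1 != 0 -> W - Z != 0 -> (i <= s)%N -> (j <= N - s)%N -> (s <= N)%N ->
  W ^+ (i + j + e) * ((X * (W - Z) / (W - 1)) ^+ s *
     ((W / (W - Z)) ^+ (s - i) * (W / (W - Z) - 1) ^+ i) *
     ((W / (W - 1)) ^+ (N - s - j) * (W / (W - 1) - 1) ^+ j))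
  = (W / (W - 1)) ^+ N * (W ^+ e * X ^+ s * Z ^+ i).
Proof.
move=> W0 W1 WZ hi hj sN.
apply: (key0 (r := Z / W) (q := W^-1)) => //.
- by field; rewrite W0 WZ.
- by field; rewrite W0 W1.
- by field; rewrite WZ W1.
- by field.
- by rewrite mulfV.
Qed.

Definition KK := {fraction {mpoly int[4]}}.
Definition Wv : KK := tofrac ('X_(0 : 'I_4) : {mpoly int[4]}).
Definition Xv : KK := tofrac ('X_(1 : 'I_4) : {mpoly int[4]}).
Definition Yv : KK := tofrac ('X_(2 : 'I_4) : {mpoly int[4]}).
Definition Zv : KK := tofrac ('X_(3 : 'I_4) : {mpoly int[4]}).
Definition alv : KK := Wv / (Wv - Zv).
Definition bev : KK := Wv / (Wv - 1).
Definition xiv : KK := Xv * (Wv - Zv) / (Wv - 1).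

Lemma Wv0 : Wv != 0.
Proof.
rewrite /Wv tofrac_eq0; apply/eqP => h.
by have := congr1 (mcoeff U_((0 : 'I_4))) h; rewrite mcoeffXU mcoeff0 eqxx.
Qed.

Lemma Wv1 : Wv - 1 != 0.
Proof.
rewrite /Wv -tofrac1 -tofracB tofrac_eq0; apply/eqP => h.
have := congr1 (mcoeff U_((0 : 'I_4))) h.
by rewrite mcoeffB mcoeffXU mcoeff1 mnm1_eq0 mcoeff0 eqxx subr0.
Qed.

Lemma WvZ : Wv - Zv != 0.
Proof.
rewrite /Wv /Zv -tofracB tofrac_eq0; apply/eqP => h.
have := congr1 (mcoeff U_((0 : 'I_4))) h.
by rewrite mcoeffB !mcoeffXU mcoeff0 eqxx subr0.
Qed.

Lemma KK_nat_inj : injective (fun m : nat => (m%:R : KK)).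
Proof.
have h : forall k : nat, (k%:R : KK) = tofrac ((k%:R : int)%:MP : {mpoly int[4]}).
  by move=> k; rewrite mpolyC_nat rmorph_nat.
move=> m m' /= /eqP; rewrite !h tofrac_eq mpolyC_eq eqr_nat.
by move/eqP.
Qed.

Import Num.Theory.

Lemma bev0 : bev != 0.
Proof. apply: mulf_neq0; [exact: Wv0 | rewrite invr_eq0; exact: Wv1]. Qed.

Lemma rearr1 (R : comNzRingType) (p q r s t : R) : p * (q * r * s * t) = r * (p * (q * s * t)).
Proof. by ring. Qed.

Lemma rearr2 (R : comNzRingType) (y b w x z : R) : y * (b * (w * x * z)) = b * (w * x * y * z).
Proof. by ring. Qed.

Definition Gs (V : finType) (E : rel V) (wt : V -> nat) : KK :=
  \sum_(A : {set V}) (Wv ^+ ext_edges E A * Xv ^+ #|A| * Yv ^+ wtset wt A * Zv ^+ int_edges E A).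

Lemma tofrac_G (V : finType) (E : rel V) (wt : V -> nat) :
  tofrac (genDegPoly E wt) = Gs E wt.
Proof.
rewrite /genDegPoly rmorph_sum; apply: eq_bigr => A _.
rewrite !rmorphM !rmorphXn; reflexivity.
Qed.

Lemma final_term (V : finType) (E : rel V) (wt : V -> nat) :
  forest E ->
  Wv ^+ #|edges E| * Tsum E wt xiv Yv alv bev = bev ^+ #|V| * Gs E wt.
Proof.
move=> Fo; have [SG _] := Fo.
rewrite /Tsum mulr_sumr /Gs mulr_sumr; apply: eq_bigr => A _.
rewrite !gpolyE.
have hc : #|~: A| = (#|V| - #|A|)%N by rewrite -(cardsC A) addKn.
rewrite hc -(edge_part A SG).
have hi : (int_edges E A <= #|A|)%N by apply: int_le.
have hj : (int_edges E (~: A) <= #|V| - #|A|)%N by rewrite -hc; apply: int_le.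
have hs : (#|A| <= #|V|)%N by apply: max_card.
have K' : Wv ^+ (int_edges E A + int_edges E (~: A) + ext_edges E A) *
   (xiv ^+ #|A| * (alv ^+ (#|A| - int_edges E A) * (alv - 1) ^+ int_edges E A) *
    (bev ^+ (#|V| - #|A| - int_edges E (~: A)) * (bev - 1) ^+ int_edges E (~: A)))
  = bev ^+ #|V| * (Wv ^+ ext_edges E A * Xv ^+ #|A| * Zv ^+ int_edges E A).
  exact: (@key _ Wv Xv Zv _ _ _ (ext_edges E A) _ Wv0 Wv1 WvZ hi hj hs).
by rewrite rearr1 K' rearr2.
Qed.

Theorem theorem1p1 (V V' : finType) (E : rel V) (E' : rel V')
  (wt : V -> nat) (wt' : V' -> nat) :
  forest E -> forest E' ->
  (forall v, (0 < wt v)%N) -> (forall v, (0 < wt' v)%N) ->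
  (forall n : nat, chromMacMahon E wt n = chromMacMahon E' wt' n) ->
  genDegPoly E wt = genDegPoly E' wt'.
Proof.
move=> Fo Fo' _ _ HX.
have [HN HM] := NM_eq Fo Fo' HX.
have HT : forall a b, (0 < a)%N -> (0 < b)%N ->
    Tsum E wt xiv Yv a%:R b%:R = Tsum E' wt' xiv Yv a%:R b%:R.
  move=> a b a0 b0.
  by rewrite -(eval_T wt xiv Yv Fo a0 b0) -(eval_T wt' xiv Yv Fo' a0 b0) HX.
have HT2 := Tsum_transfer KK_nat_inj HT alv bev.
have F1 := final_term wt Fo; have F2 := final_term wt' Fo'.
apply/eqP; rewrite -tofrac_eq; apply/eqP; rewrite !tofrac_G.
have hb : bev ^+ #|V| != 0 by exact: (expf_neq0 _ bev0).
apply: (mulfI hb); rewrite -F1 HT2 HM F2 HN; reflexivity.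
Qed.
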